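(* Let $\mathcal K$ denote one of the categories $\mathcal I$ or $\mathcal J$, with degree functor $\lambda(\mathbf k)=|\mathbf k|$ on $\mathcal I$ and $\lambda(\mathbf k_1,\mathbf k_2)=|\mathbf k_1|$ on $\mathcal J$. Suppose that $\mathcal A$ is a normal and multiplicative subcategory of automorphisms in $\mathcal K$ such that the inclusion $\mathcal K_{\mathcal A}\to\mathcal K$ is homotopy cofinal. Then $(\mathcal K,\mathcal A)$ is a well-structured relative index category, and if all objects of $\mathcal A$ have positive degree, then $(\mathcal K,\mathcal A)$ is very well-structured.
   Context: $\mathcal I$: objects $\mathbf n=\{1,\dots,n\}$, morphisms injections, symmetric monoidal under concatenation $\sqcup$ with unit $\mathbf 0$. $\mathcal J$: objects pairs $(\mathbf n_1,\mathbf n_2)$, morphisms $(\beta_1,\beta_2,\sigma)$ with $\beta_i$ injections and $\sigma$ a bijection between the complements of their images, composed by $(\beta_1\alpha_1,\beta_2\alpha_2,\tau)$ with $\tau=\sigma$ on $\mathbf n_1\setminus\beta_1$ and $\tau\beta_1=\beta_2\rho$ on $\mathbf m_1\setminus\alpha_1$; symmetric monoidal under componentwise concatenation with symmetry $(\chi,\chi,\mathrm{id})$. $\mathbb N_0$ is the poset $0\to1\to2\to\cdots$, symmetric monoidal under addition. A subcategory of automorphisms $\mathcal A$ of a small symmetric monoidal category $(\mathcal K,\sqcup,\mathbf 0)$ is a subcategory all of whose morphisms are automorphisms; $\mathcal A(\mathbf k)$ denotes its automorphism group at $\mathbf k$. It is normal if for each isomorphism $\alpha\colon\mathbf k\to\mathbf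 l$ of $\mathcal K$, $\mathbf k\in\mathcal A$ iff $\mathbf l\in\mathcal A$, and then $\gamma\mapsto\alpha\gamma\alpha^{-1}$ is an isomorphism $\mathcal A(\mathbf k)\to\mathcal A(\mathbf l)$; multiplicative if $\sqcup$ restricts to $\mathcal A\times\mathcal A\to\mathcal A$. $\mathcal K_{\mathcal A}$ is the full subcategory of $\mathcal K$ on the objects of $\mathcal A$. A subcategory $\mathcal B\subseteq\mathcal C$ is homotopy cofinal if each comma category $(c\downarrow\mathcal B)$ has contractible classifying space. A well-structured relative index category is $(\mathcal K,\lambda,\mathcal A)$ with $\lambda\colon\mathcal K\to\mathbb N_0$ strong symmetric monoidal and $\mathcal A$ normal multiplicative, such that: (i) a morphism $\mathbf k\to\mathbf l$ is an isomorphism iff $\lambda(\mathbf k)=\lambda(\mathbf l)$; (ii) for $\mathbf k\in\mathcal A$ and any $\mathbf l$, each connected component of the comma category $(\mathbf k\sqcup-\downarrow\mathbf l)$ (objects $(\mathbf n,\alpha\colon\mathbf k\sqcup\mathbf n\to\mathbf l)$) has a terminal object; (iii) for $\mathbf k\in\mathcal A$, the right action of $\mathcal A(\mathbf k)$ on $(\mathbf k\sqcup-\downarrow\mathbf l)$ induces a free action on its set of components; (iv) $\mathcal K_{\mathcal A}\to\mathcal K$ is homotopy cofinal. It is very well-structured if moreover for all $\mathbf k\in\mathcal A$, all $\mathbf l$ and $n\ge1$, the right action of $\Sigma_n\ltimes\mathcal A(\mathbf k)^{\times n}$ on $(\mathbf k^{\sqcup n}\sqcup-\downarrow\mathbf l)$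 (via $(\sigma;f_1,\dots,f_n)\mapsto\sigma_*\circ(f_1\sqcup\cdots\sqcup f_n)$, $\sigma_*$ the symmetry-induced permutation of $\mathbf k^{\sqcup n}$) is free on the set of connected components. *)

(* Defs.v *)
From Stdlib Require Import Relations.
From mathcomp Require Import all_boot all_fingroup.
Set Implicit Arguments. Unset Strict Implicit. Unset Printing Implicit Defensive.

(* A small (strict) symmetric monoidal category, given concretely by raw
   morphism data together with a validity predicate ([valid f] = "f is a
   morphism"), composition, identities, the monoidal product on objects and
   morphisms, the unit, a degree functor to N_0, and the permutation
   [bperm k n s] = s_* of k^{⊔n} = k ⊔ (k ⊔ ... ⊔ (k ⊔ 0)) induced by the
   symmetry (block i is moved to block s i). *)
Record SMCat := {
  ob : Type;
  hom : ob -> ob -> Type;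
  valid : forall a b, hom a b -> bool;
  idm : forall a, hom a a;
  comp : forall a b c, hom b c -> hom a b -> hom a c;
  tens : ob -> ob -> ob;
  tensh : forall a b c d, hom a b -> hom c d -> hom (tens a c) (tens b d);
  unit0 : ob;
  deg : ob -> nat;
  bperm : forall k n, 'S_n -> hom (iter n (tens k) unit0) (iter n (tens k) unit0)
}.
Arguments valid {s a b} : rename.
Arguments idm {s} a : rename.
Arguments comp {s a b c} : rename.
Arguments tensh {s a b c d} : rename.
Arguments tens : clear implicits.
Arguments deg : clear implicits.
Arguments hom : clear implicits.
Arguments bperm : clear implicits.

Definition homI (m n : nat) : Type := {ffun 'I_m -> 'I_n}.
Definition validI m n (f : homI m n) : bool := injectiveb f.
Definition idI n : homI n n := [ffun i => i].
Definition compI a b c (g : homI b c) (f : homI a b) : homI a c :=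
  [ffun i => g (f i)].
Definition tensI a b c d (f : homI a b) (g : homI c d) : homI (a + c) (b + d) :=
  [ffun i => match split i with
             | inl x => lshift d (f x)
             | inr y => rshift b (g y) end].
Definition perm_nat n (s : 'S_n) (b : nat) : nat :=
  match (insub b : option 'I_n) with Some b' => nat_of_ord (s b') | None => b end.
Definition bpermN (N k n : nat) (s : 'S_n) : homI N N :=
  [ffun i : 'I_N => insubd i (k * perm_nat s (i %/ k) + i %% k)].

Definition ICat : SMCat := {|
  ob := nat; hom := homI; valid := validI; idm := idI; comp := compI;
  tens := addn; tensh := tensI; unit0 := 0; deg := fun n => n;
  bperm := fun k n s => bpermN (iter n (addn k) 0) k s |}.

(* a morphism (m1,m2) -> (n1,n2) is (beta1, beta2, sigma); sigma is encoded
   as a map 'I_n1 -> option 'I_n2 which is None exactly on the image of beta1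
   and restricts to a bijection from the complement of im beta1 onto the
   complement of im beta2. *)
Definition homJ (a b : nat * nat) : Type :=
  ({ffun 'I_a.1 -> 'I_b.1} * {ffun 'I_a.2 -> 'I_b.2}
   * {ffun 'I_b.1 -> option 'I_b.2})%type.
Definition validJ a b (f : homJ a b) : bool :=
  [&& injectiveb f.1.1, injectiveb f.1.2,
   [forall x, (f.2 x == None) == (x \in codom f.1.1)],
   [forall x, forall y, (f.2 x == Some y) ==> (y \notin codom f.1.2)],
   [forall x, forall x', ((f.2 x == f.2 x') && (f.2 x != None)) ==> (x == x')] &
   [forall y, (y \notin codom f.1.2) ==> [exists x, f.2 x == Some y]]].
Definition idJ a : homJ a a := ([ffun i => i], [ffun i => i], [ffun _ => None]).
(* (beta, sigma) o (alpha, rho) = (beta1 alpha1, beta2 alpha2, tau) with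
   tau = sigma off im beta1 and tau (beta1 y) = beta2 (rho y) *)
Definition compJ a b c (g : homJ b c) (f : homJ a b) : homJ a c :=
  ([ffun i => g.1.1 (f.1.1 i)], [ffun i => g.1.2 (f.1.2 i)],
   [ffun x => if g.2 x is Some z then Some z else
              if [pick y : 'I_b.1 | g.1.1 y == x] is Some y
              then omap g.1.2 (f.2 y) else None]).
Definition tensJ (a c : nat * nat) : nat * nat := (a.1 + c.1, a.2 + c.2).
Definition tenshJ a b c d (f : homJ a b) (g : homJ c d) :
    homJ (tensJ a c) (tensJ b d) :=
  (tensI f.1.1 g.1.1, tensI f.1.2 g.1.2,
   [ffun x : 'I_(b.1 + d.1) => match split x with
     | inl u => omap (@lshift b.2 d.2) (f.2 u)
     | inr v => omap (@rshift b.2 d.2) (g.2 v) end]).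

Definition JCat : SMCat := {|
  ob := nat * nat; hom := homJ; valid := validJ; idm := idJ; comp := compJ;
  tens := tensJ; tensh := tenshJ; unit0 := (0, 0); deg := fst;
  bperm := fun k n s => (bpermN _ k.1 s, bpermN _ k.2 s, [ffun _ => None]) |}.

Section Generic.
Variable K : SMCat.

Definition is_iso (a b : ob K) (f : hom K a b) : Prop :=
  valid f /\ exists g : hom K b a, valid g /\ comp g f = idm a /\ comp f g = idm b.

Definition obpow (k : ob K) (n : nat) : ob K := iter n (tens K k) (unit0 K).

Definition deg_strong_monoidal : Prop :=
  deg K (unit0 K) = 0 /\
  (forall a b, deg K (tens K a b) = deg K a + deg K b) /\
  (forall a b (f : hom K a b), valid f -> deg K a <= deg K b).

Definition aut_subcat (Aob : ob K -> Prop) (Ahom : forall k, hom K k k -> Prop) :=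
  (forall k, Aob k -> Ahom k (idm k)) /\
  (forall k g, Ahom k g -> Aob k /\ is_iso g) /\
  (forall k g h, Ahom k g -> Ahom k h -> Ahom k (comp g h)).

Definition normal_autsub (Aob : ob K -> Prop) (Ahom : forall k, hom K k k -> Prop) :=
  forall k l (a : hom K k l) (b : hom K l k),
    valid a -> valid b -> comp b a = idm k -> comp a b = idm l ->
    (Aob k <-> Aob l) /\ (forall g, Ahom k g -> Ahom l (comp a (comp g b))).

Definition mult_autsub (Aob : ob K -> Prop) (Ahom : forall k, hom K k k -> Prop) :=
  (forall k l, Aob k -> Aob l -> Aob (tens K k l)) /\
  (forall k l g h, Ahom k g -> Ahom l h -> Ahom (tens K k l) (tensh g h)).

Definition cobj (k l : ob K) := {n : ob K & hom K (tens K k n) l}.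
Definition cvalid k l (x : cobj k l) : Prop := valid (projT2 x).
Definition cmor k l (x y : cobj k l) (f : hom K (projT1 x) (projT1 y)) : Prop :=
  valid f /\ comp (projT2 y) (tensh (idm k) f) = projT2 x.
Definition carrow k l (x y : cobj k l) : Prop :=
  cvalid x /\ cvalid y /\ exists f, @cmor k l x y f.
Definition cconn k l : relation (cobj k l) := clos_refl_sym_trans _ (@carrow k l).

Definition comps_have_terminal (k l : ob K) : Prop :=
  forall x : cobj k l, cvalid x ->
    exists t : cobj k l, cvalid t /\ cconn x t /\
      forall y : cobj k l, cvalid y -> cconn y t -> exists! f, @cmor k l y t f.

Definition cact k l (x : cobj k l) (g : hom K k k) : cobj k l :=
  existT _ (projT1 x) (comp (projT2 x) (tensh g (idm (projT1 x)))).

Definition free_on_comps (k l : ob K) (P : hom K k k -> Prop) : Prop :=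
  forall (x : cobj k l) g, cvalid x -> P g -> cconn (cact x g) x -> g = idm k.

Fixpoint tens_fam (k : ob K) (n : nat) :
    ('I_n -> hom K k k) -> hom K (obpow k n) (obpow k n) :=
  match n return ('I_n -> hom K k k) -> hom K (obpow k n) (obpow k n) with
  | 0 => fun _ => idm _
  | n'.+1 => fun f => tensh (f ord0) (@tens_fam k n' (fun i => f (lift ord0 i)))
  end.

(* right action of (s; f_1,...,f_n) in Sigma_n ⋉ A(k)^n, via s_* o (f_1 ⊔...⊔ f_n) *)
Definition cact_wr k n l (x : cobj (obpow k n) l) (s : 'S_n) (f : 'I_n -> hom K k k)
  : cobj (obpow k n) l :=
  existT _ (projT1 x)
    (comp (projT2 x) (tensh (comp (bperm K k n s) (tens_fam f)) (idm (projT1 x)))).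

(* (K, deg, A) is well-structured; HC A stands for
   "K_A -> K is homotopy cofinal" *)
Definition well_structured (HC : (ob K -> Prop) -> Prop)
    (Aob : ob K -> Prop) (Ahom : forall k, hom K k k -> Prop) : Prop :=
  deg_strong_monoidal /\ aut_subcat Aob Ahom /\ normal_autsub Aob Ahom /\
  mult_autsub Aob Ahom /\
  (forall a b (f : hom K a b), valid f -> (is_iso f <-> deg K a = deg K b)) /\
  (forall k l, Aob k -> comps_have_terminal k l) /\
  (forall k l, Aob k -> free_on_comps l (Ahom k)) /\
  HC Aob.

Definition very_well_structured (HC : (ob K -> Prop) -> Prop)
    (Aob : ob K -> Prop) (Ahom : forall k, hom K k k -> Prop) : Prop :=
  well_structured HC Aob Ahom /\
  forall k l n, Aob k -> 0 < n ->
    forall (x : cobj (obpow k n) l) (s : 'S_n) (f : 'I_n -> hom K k k),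
      cvalid x -> (forall i, Ahom k (f i)) -> cconn (cact_wr x s f) x ->
      s = 1%g /\ (forall i, f i = idm k).
End Generic.

(* Main.v *)
Require Import Defs.
From mathcomp Require Import all_boot all_fingroup.
Require Import Defs.
From Stdlib Require Import Relations.
Set Implicit Arguments. Unset Strict Implicit. Unset Printing Implicit Defensive.


Lemma ext_inj k l (a : 'I_k -> 'I_l) : injective a ->
  exists g : 'I_(l-k) -> 'I_l, injective g /\ (forall v u, g v != a u) /\
    (forall y, (forall u, a u != y) -> exists v, g v = y).
Proof.
move=> ia.
pose C : {pred 'I_l} := [pred y | y \notin codom a].
have E : l - k = #|C|.
  have H := cardC [pred y | y \in codom a].
  have H1 : #|[pred y | y \in codom a]| = k.
    by rewrite -{2}(card_ord k) -(card_codom ia).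
  rewrite card_ord H1 in H.
  have -> : #|C| = #|[predC [pred y | y \in codom a]]| by apply: eq_card.
  by rewrite -[l in l - k]H addKn.
exists (fun v => enum_val (cast_ord E v)); split; last split.
- by move=> v w /enum_val_inj /cast_ord_inj.
- move=> v u; have := enum_valP (cast_ord E v); rewrite /C /=.
  by apply: contra => /eqP ->; apply: codom_f.
- move=> y Hy; have Cy : y \in C.
    rewrite inE /=; apply/codomP => -[u yu]; by move: (Hy u); rewrite yu eqxx.
  exists (cast_ord (esym E) (enum_rank_in Cy y)).
  by rewrite cast_ordKV enum_rankK_in.
Qed.


Lemma cconn_inv (K : SMCat) k l T (R : @cobj K k l -> T) :
  (forall x y, carrow x y -> R x = R y) -> forall x y, cconn x y -> R x = R y.
Proof.
move=> H x y; elim=> [a b /H // | a // | a b _ -> // | a b c _ -> _ -> //].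
Qed.

Lemma tensI_l a b c d (f : homI a b) (g : homI c d) u :
  tensI f g (lshift c u) = lshift d (f u).
Proof.
rewrite ffunE; case: splitP => [j /= Hj | j /= Hj].
  by congr lshift; congr (f _); apply: val_inj.
by move: (ltn_ord u); rewrite Hj ltnNge leq_addr.
Qed.

Lemma tensI_r a b c d (f : homI a b) (g : homI c d) u :
  tensI f g (rshift a u) = rshift b (g u).
Proof.
rewrite ffunE; case: splitP => [j /= Hj | j /= Hj].
  by move: (ltn_ord j); rewrite -Hj ltnNge leq_addr.
by congr rshift; congr (g _); apply: val_inj; move/eqP: Hj; rewrite eqn_add2l => /eqP.
Qed.

Lemma idIE n i : idI n i = i. Proof. by rewrite ffunE. Qed.
Lemma compIE a b c (g : homI b c) (f : homI a b) i : compI g f i = g (f i).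
Proof. by rewrite ffunE. Qed.

Definition rI k l (x : @cobj ICat k l) : {ffun 'I_k -> 'I_l} :=
  [ffun u => (projT2 x : homI _ _) (lshift _ u)].

Lemma rI_conn k l (x y : @cobj ICat k l) : cconn x y -> rI x = rI y.
Proof.
apply: cconn_inv => {x y} -[n a] [m b] [_ [_ [f [_ /= E]]]].
apply/ffunP => u; rewrite !ffunE -E /=.
by rewrite compIE tensI_l idIE.
Qed.

Lemma split_l m n (u : 'I_m) : split (lshift n u) = inl u.
Proof. exact: (unsplitK (inl u)). Qed.
Lemma split_r m n (u : 'I_n) : split (rshift m u) = inr u.
Proof. exact: (unsplitK (inr u)). Qed.


Lemma validI_le a b (f : homI a b) : validI f -> a <= b.
Proof. by move/injectiveP/leq_card; rewrite !card_ord. Qed.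

Lemma degI : deg_strong_monoidal ICat.
Proof. split=> //; split=> // a b f /validI_le //. Qed.

Lemma isoI a b (f : hom ICat a b) : valid f -> (is_iso f <-> deg ICat a = deg ICat b).
Proof.
move=> vf; split.
  move=> [_ [g [vg _]]]; apply/eqP; rewrite eqn_leq.
  by rewrite (validI_le vf) (validI_le vg).
rewrite /= => ab; subst b; split => //.
have inj : injective (f : homI a a) by apply/injectiveP.
exists [ffun y => invF inj y]; split; [|split].
- apply/injectiveP => x y; rewrite !ffunE => /(congr1 f).
  by rewrite !f_invF.
- by apply/ffunP => x; rewrite /= !ffunE invF_f.
- by apply/ffunP => x; rewrite /= !ffunE f_invF.
Qed.

Lemma freeI k l (P : hom ICat k k -> Prop) : free_on_comps l P.
Proof.
move=> [n a] g va _ /rI_conn E.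
have ia : injective (a : homI _ _) by apply/injectiveP.
apply/ffunP => u; move/ffunP: E => /(_ u); rewrite !ffunE /=.
rewrite split_l => /ia /lshift_inj.
by [].
Qed.


Lemma lshift_rshift_neq m n (u : 'I_m) (v : 'I_n) : lshift n u != rshift m v.
Proof.
apply/eqP => /(congr1 val) /= E; move: (ltn_ord u); by rewrite E ltnNge leq_addr.
Qed.

Lemma cmorI_uniq k l (y t : @cobj ICat k l) f f' :
  cvalid t -> cmor f -> @cmor ICat k l y t f' -> f = f'.
Proof.
case: y t f f' => [m c] [n b] /= f f' vt [_ E] [_ E'].
have ib : injective (b : homI _ _) by apply/injectiveP.
apply/ffunP => v; rewrite -E' in E; move/ffunP: E => /(_ (rshift k v)).
by rewrite !compIE !tensI_r => /ib /rshift_inj.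
Qed.

Lemma termI k l : comps_have_terminal (K:=ICat) k l.
Proof.
move=> [n a] va.
have ia : injective (a : homI _ _) by apply/injectiveP.
pose a0 := fun u => (a : homI _ _) (lshift n u).
have ia0 : injective a0 by move=> u u' /ia /lshift_inj.
have [g [ig [ga gc]]] := ext_inj ia0.
pose b : homI (k + (l - k)) l :=
  [ffun j => match split j with inl u => a0 u | inr v => g v end].
pose t : @cobj ICat k l := existT _ (l - k) b.
have bl : forall u, b (lshift _ u) = a0 u by move=> u; rewrite ffunE split_l.
have br : forall v, b (rshift _ v) = g v by move=> v; rewrite ffunE split_r.
have vt : cvalid t.
  apply/injectiveP => j j'; rewrite -(splitK j) -(splitK j').
  case: (split j) => [u|v]; case: (split j') => [u'|v'] /=;
    rewrite ?bl ?br.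
  - by move/ia0 => ->.
  - by move=> E; move: (ga v' u); rewrite E eqxx.
  - by move=> E; move: (ga v u'); rewrite E eqxx.
  - by move/ig => ->.
have ex : forall y, cvalid y -> rI y = rI t -> exists f, @cmor ICat k l y t f.
  move=> [m c] vc /= /ffunP Ec.
  have ic : injective (c : homI _ _) by apply/injectiveP.
  have : forall v : 'I_m, exists w, g w = (c : homI _ _) (rshift k v).
    move=> v; apply: gc => u; move: (Ec u); rewrite !ffunE /= split_l => <-.
    apply/eqP => /ic /eqP; by rewrite (negbTE (lshift_rshift_neq _ _)).
  case/fin_all_exists => F FE.
  exists [ffun v => F v]; split.
    apply/injectiveP => v v'; rewrite !ffunE => /(congr1 g); rewrite !FE.
    by move/ic/rshift_inj.
  apply/ffunP => j; rewrite compIE -(splitK j); case: (split j) => [u|v] /=.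
    rewrite tensI_l idIE bl; move: (Ec u); by rewrite !ffunE /= split_l.
  by rewrite tensI_r ffunE split_r ffunE FE.
have rt : forall u, rI t u = a0 u by move=> u; rewrite ffunE /= bl.
exists t; split => //; split.
  apply: rst_step; split => //; split => //.
  apply: ex => //; apply/ffunP => u; by rewrite rt ffunE.
move=> y vy cy; have [f Hf] := ex y vy (rI_conn cy).
exists f; split => // f'; exact: cmorI_uniq.
Qed.


Lemma key_arith k n (s : 'S_n) (i : 'I_n) (r v : nat) : r < k -> v < k ->
  k * s i + v = i * k + r -> s i = i /\ v = r.
Proof.
move=> rk vk E; have k0 : 0 < k by apply: leq_ltn_trans rk.
have Em := congr1 (modn^~ k) E; rewrite /= mulnC !modnMDl !modn_small // in Em.
subst v; split => //; apply: val_inj => /=.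
by move/eqP: E; rewrite eqn_add2r [_ * k]mulnC eqn_pmul2l // => /eqP.
Qed.

Lemma bpermN_val N k n (s : 'S_n) (i : 'I_n) (r : 'I_k) (j : 'I_N) :
  N = k * n -> val j = i * k + r -> val (bpermN N k s j) = k * s i + r.
Proof.
move=> EN Ej; have k0 : 0 < k by apply: leq_ltn_trans (ltn_ord r).
have dj : val j %/ k = i by rewrite Ej divnMDl // divn_small // addn0.
have mj : val j %% k = r by rewrite Ej modnMDl modn_small.
rewrite ffunE val_insubd dj mj /perm_nat valK.
have -> : k * s i + r < N.
  rewrite EN; apply: (leq_trans (n := k * (s i).+1)).
    by rewrite mulnS addnC ltn_add2r.
  by rewrite leq_mul2l ltn_ord orbT.
by [].
Qed.

Lemma tfI_val k n (f : 'I_n -> hom ICat k k) (i : 'I_n) (r : 'I_k)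
    (j : 'I_(@obpow ICat k n)) :
  val j = i * k + r -> val ((tens_fam f : homI _ _) j) = i * k + (f i : homI _ _) r.
Proof.
elim: n f i j => [|n IH] f i j; first by case: i.
rewrite /= ffunE.
case: (unliftP ord0 i) => [i'|] -> Ej.
  rewrite lift0 in Ej; case: splitP => [j0 /= Hj | j1 /= Hj].
    by move: (ltn_ord j0); rewrite -Hj Ej mulSn -addnA ltnNge leq_addr.
  rewrite Hj mulSn in Ej; move/eqP: Ej; rewrite -addnA eqn_add2l => /eqP Ej.
  by rewrite (IH _ _ _ Ej) /bump leq0n add1n mulSn addnA.
rewrite (_ : nat_of_ord (@ord0 n) = 0) // mul0n add0n in Ej *; case: splitP => [j0 /= Hj | j1 /= Hj].
  by congr (nat_of_ord (f ord0 _)); apply: val_inj; rewrite /= -Hj.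
by move: (ltn_ord r); rewrite -Ej Hj ltnNge leq_addr.
Qed.

Lemma veryI k l n (x : @cobj ICat (@obpow ICat k n) l) (s : 'S_n)
    (f : 'I_n -> hom ICat k k) :
  0 < k -> cvalid x -> cconn (cact_wr x s f) x -> s = 1%g /\ (forall i, f i = idm k).
Proof.
move=> k0 vx /rI_conn E.
case: x vx E => [m a] /= va E.
have ia : injective (a : homI _ _) by apply/injectiveP.
have H : forall (i : 'I_n) (r : 'I_k), s i = i /\ (f i : homI _ _) r = r.
  move=> i r.
  have Hj : i * k + r < @obpow ICat k n.
    rewrite /obpow /= iter_addn_0; apply: (leq_trans (n := i.+1 * k)).
      by rewrite mulSn addnC ltn_add2r.
    by rewrite mulnC leq_mul2l ltn_ord orbT.
  pose j := Ordinal Hj.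
  have Ev : val ((tens_fam f : homI _ _) j) = i * k + (f i : homI _ _) r.
    exact: tfI_val.
  have EN : @obpow ICat k n = k * n by rewrite /obpow /= iter_addn_0.
  have Eb := bpermN_val s (i := i) (r := (f i : homI _ _) r) EN Ev.
  move/ffunP: E => /(_ j); rewrite /rI !ffunE /= split_l compIE => /ia /lshift_inj /(congr1 val).
  rewrite /= Eb.
  move=> /= E2; have [] := key_arith (ltn_ord r) (ltn_ord _) E2.
  by move=> -> /val_inj.
split.
  by apply/permP => i; rewrite perm1; case: (H i (Ordinal k0)).
by move=> i; apply/ffunP => r; rewrite ffunE; case: (H i r).
Qed.


Section VJ.
Variables (a b : nat * nat) (f : homJ a b).
Definition VJ : Prop :=
  [/\ injective f.1.1, injective f.1.2,
   forall x, (f.2 x == None) = (x \in codom f.1.1),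
   forall x y, f.2 x = Some y -> y \notin codom f.1.2 &
   (forall x x', f.2 x = f.2 x' -> f.2 x != None -> x = x') /\
   (forall y, y \notin codom f.1.2 -> exists x, f.2 x = Some y)].

Lemma validJP : validJ f <-> VJ.
Proof.
split.
  case/andP => /injectiveP i1 /and5P [/injectiveP i2 /forallP c3 /forallP c4 /forallP c5 /forallP c6].
  split => //.
  - by move=> x; move/eqP: (c3 x).
  - by move=> x y E; move: (c4 x) => /forallP /(_ y) /implyP; apply; rewrite E.
  - split; first by move=> x x' E N; move: (c5 x) => /forallP /(_ x') /implyP; rewrite N E eqxx => /(_ isT) /eqP.
    by move=> y /(implyP (c6 y)) /existsP [x /eqP]; exists x.
case=> i1 i2 c3 c4 [c5 c6]; apply/andP; split; first exact/injectiveP.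
apply/and5P; split; first exact/injectiveP.
- by apply/forallP => x; rewrite c3.
- by apply/forallP => x; apply/forallP => y; apply/implyP => /eqP; apply: c4.
- apply/forallP => x; apply/forallP => x'; apply/implyP => /andP [/eqP E N].
  by rewrite (c5 _ _ E N).
- apply/forallP => y; apply/implyP => /c6 [x E]; apply/existsP; exists x; by rewrite E.
Qed.
End VJ.

Lemma validJ_le a b (f : homJ a b) : validJ f -> a.1 <= b.1.
Proof. by case/validJP => i1 _ _ _ _; move: (leq_card _ i1); rewrite !card_ord. Qed.

Lemma degJ : deg_strong_monoidal JCat.
Proof. split=> //; split=> // a b f /validJ_le //. Qed.

Lemma compJ1 a b c (g : homJ b c) (f : homJ a b) i : (compJ g f).1.1 i = g.1.1 (f.1.1 i).
Proof. by rewrite ffunE. Qed.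
Lemma compJ2 a b c (g : homJ b c) (f : homJ a b) i : (compJ g f).1.2 i = g.1.2 (f.1.2 i).
Proof. by rewrite ffunE. Qed.

Lemma compJ3_at a b c (g : homJ b c) (f : homJ a b) x y :
  validJ g -> g.1.1 y = x -> (compJ g f).2 x = omap g.1.2 (f.2 y).
Proof.
case/validJP => i1 _ c3 _ _ E; rewrite ffunE.
have -> : g.2 x = None by apply/eqP; rewrite c3 -E codom_f.
case: pickP => [y' /eqP E'|H]; last by move: (H y); rewrite E eqxx.
by rewrite (i1 y' y) // E E'.
Qed.

Lemma tenshJ3l a b c d (f : homJ a b) (g : homJ c d) u :
  (tenshJ f g).2 (lshift _ u) = omap (@lshift b.2 d.2) (f.2 u).
Proof. by rewrite ffunE split_l. Qed.
Lemma tenshJ3r a b c d (f : homJ a b) (g : homJ c d) u :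
  (tenshJ f g).2 (rshift _ u) = omap (@rshift b.2 d.2) (g.2 u).
Proof. by rewrite ffunE split_r. Qed.

Lemma isoJ a b (f : hom JCat a b) : valid f -> (is_iso f <-> deg JCat a = deg JCat b).
Proof.
move=> vf; split.
  move=> [_ [g [vg _]]]; apply/eqP; rewrite eqn_leq.
  by rewrite (validJ_le vf) (validJ_le vg).
case: a b f vf => [a1 a2] [b1 b2] /= f vf ab; subst b1.
move: (vf) => /validJP [i1 i2 c3 c4 [c5 c6]].
have s1 : forall x, x \in codom f.1.1 by apply: inj_card_onto.
have n3 : forall x, f.2 x = None by move=> x; apply/eqP; rewrite c3 s1.
have s2 : forall y, y \in codom f.1.2.
  move=> y; apply/negPn/negP => /c6 [x]; by rewrite n3.
have ab : a2 = b2.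
  apply/eqP; rewrite eqn_leq; move: (leq_card _ i2); rewrite !card_ord => ->.
  have : #|'I_b2| <= #|codom f.1.2| by apply/subset_leq_card/subsetP => y _; apply: s2.
  by rewrite card_codom // !card_ord.
subst b2; split => //.
exists ([ffun y => invF i1 y], [ffun y => invF i2 y], [ffun _ => None]).
have ig1 : injective ([ffun y => invF i1 y] : homI _ _).
  by move=> x y; rewrite !ffunE => /(congr1 f.1.1); rewrite !f_invF.
have ig2 : injective ([ffun y => invF i2 y] : homI _ _).
  by move=> x y; rewrite !ffunE => /(congr1 f.1.2); rewrite !f_invF.
split; [|split].
- apply/validJP; split => //=.
  + move=> x; rewrite ffunE eqxx; apply/esym/codomP; exists (f.1.1 x).
    by rewrite ffunE invF_f.
  + by move=> x y; rewrite ffunE.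
  + split; first by move=> x x' _; rewrite ffunE.
    move=> y /codomP []; exists (f.1.2 y); by rewrite ffunE invF_f.
- rewrite /= /compJ /idJ /=; congr (_, _, _); apply/ffunP => x; rewrite !ffunE //=.
  + by rewrite invF_f.
  + by rewrite invF_f.
  + by case: pickP => // y _; rewrite n3.
- rewrite /= /compJ /idJ /=; congr (_, _, _); apply/ffunP => x; rewrite !ffunE //=.
  + by rewrite f_invF.
  + by rewrite f_invF.
  + by rewrite n3; case: pickP => // y _; rewrite ffunE.
Qed.


Definition rJ1 k l (x : @cobj JCat k l) : {ffun 'I_k.1 -> 'I_l.1} :=
  [ffun u => (projT2 x : homJ _ _).1.1 (lshift _ u)].
Definition rJ2 k l (x : @cobj JCat k l) : {ffun 'I_k.2 -> 'I_l.2} :=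
  [ffun u => (projT2 x : homJ _ _).1.2 (lshift _ u)].

Lemma rJ_conn k l (x y : @cobj JCat k l) : cconn x y -> rJ1 x = rJ1 y /\ rJ2 x = rJ2 y.
Proof.
move=> C; split; move: C; apply: cconn_inv => {x y} -[n a] [m b] [_ [_ [f [_ /= E]]]].
  apply/ffunP => u; rewrite !ffunE -E /=.
  by rewrite ffunE tensI_l ffunE.
apply/ffunP => u; rewrite !ffunE -E /=.
by rewrite ffunE tensI_l ffunE.
Qed.

Lemma freeJ k l (P : hom JCat k k -> Prop) :
  (forall g, P g -> valid g) -> free_on_comps l P.
Proof.
move=> HP [n a] g va Pg /rJ_conn [E1 E2].
move: (HP g Pg) => /validJP [i1 i2 c3 _ _].
move: va => /validJP [ia1 ia2 _ _ _].
have g1 : forall u, g.1.1 u = u.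
  move=> u; move/ffunP: E1 => /(_ u); rewrite /rJ1 !ffunE /=.
  by rewrite split_l => /ia1 /lshift_inj.
have g2 : forall u, g.1.2 u = u.
  move=> u; move/ffunP: E2 => /(_ u); rewrite /rJ2 !ffunE /=.
  by rewrite split_l => /ia2 /lshift_inj.
clear E1 E2; case: g i1 i2 c3 g1 g2 Pg => [[g1 g2] g3] /= _ _ c3 E1' E2' _.
rewrite /= /idJ; congr (_, _, _); apply/ffunP => u; rewrite ?ffunE //.
by apply/eqP; rewrite c3; apply/codomP; exists u.
Qed.


Lemma homJ_ext a b (x y : homJ a b) : x.1.1 = y.1.1 -> x.1.2 = y.1.2 -> x.2 = y.2 -> x = y.
Proof. by case: x => [[??]?]; case: y => [[??]?] /= -> -> ->. Qed.

Lemma cmorJ_uniq k l (y t : @cobj JCat k l) f f' :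
  cvalid t -> cmor f -> @cmor JCat k l y t f' -> f = f'.
Proof.
case: y t f f' => [m c] [n b] /= f f' vt [_ E] [_ E'].
move: (vt) => /validJP [ib1 ib2 _ _ _].
rewrite -E' in E.
apply: homJ_ext; apply/ffunP => v.
- have := congr1 (fun h : homJ (tensJ k m) l => h.1.1 (rshift k.1 v)) E.
  by rewrite /= !ffunE split_r => /ib1 /rshift_inj.
- have := congr1 (fun h : homJ (tensJ k m) l => h.1.2 (rshift k.2 v)) E.
  by rewrite /= !ffunE split_r => /ib2 /rshift_inj.
- have := congr1 (fun h : homJ (tensJ k m) l => h.2 (b.1.1 (rshift k.1 v))) E.
  rewrite /= (compJ3_at (tenshJ (idJ k) f) vt (erefl _)).
  rewrite (compJ3_at (tenshJ (idJ k) f') vt (erefl _)) !tenshJ3r.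
  by case: (f.2 v) => [w|]; case: (f'.2 v) => [w'|] //= [/ib2 /rshift_inj ->].
Qed.

Lemma termJ k l : comps_have_terminal (K:=JCat) k l.
Proof.
move=> [n a] va.
move: (va) => /validJP [ia1 ia2 ac3 ac4 [ac5 ac6]].
pose a1 := fun u => (a : homJ _ _).1.1 (lshift n.1 u).
pose a2 := fun u => (a : homJ _ _).1.2 (lshift n.2 u).
have ia01 : injective a1 by move=> u u' /ia1 /lshift_inj.
have ia02 : injective a2 by move=> u u' /ia2 /lshift_inj.
have [g1 [ig1 [ga1 gc1]]] := ext_inj ia01.
have [g2 [ig2 [ga2 gc2]]] := ext_inj ia02.
pose b1 : homI (k.1 + (l.1 - k.1)) l.1 :=
  [ffun j => match split j with inl u => a1 u | inr v => g1 v end].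
pose b2 : homI (k.2 + (l.2 - k.2)) l.2 :=
  [ffun j => match split j with inl u => a2 u | inr v => g2 v end].
pose b : homJ (tensJ k (l.1 - k.1, l.2 - k.2)) l := (b1, b2, [ffun _ => None]).
pose t : @cobj JCat k l := existT _ (l.1 - k.1, l.2 - k.2) b.
have bl1 : forall u, b1 (lshift _ u) = a1 u by move=> u; rewrite ffunE split_l.
have br1 : forall v, b1 (rshift _ v) = g1 v by move=> v; rewrite ffunE split_r.
have bl2 : forall u, b2 (lshift _ u) = a2 u by move=> u; rewrite ffunE split_l.
have br2 : forall v, b2 (rshift _ v) = g2 v by move=> v; rewrite ffunE split_r.
have ib1 : injective b1.
  move=> j j'; rewrite -(splitK j) -(splitK j').
  case: (split j) => [u|v]; case: (split j') => [u'|v'] /=; rewrite ?bl1 ?br1.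
  - by move/ia01 => ->.
  - by move=> E; move: (ga1 v' u); rewrite E eqxx.
  - by move=> E; move: (ga1 v u'); rewrite E eqxx.
  - by move/ig1 => ->.
have ib2 : injective b2.
  move=> j j'; rewrite -(splitK j) -(splitK j').
  case: (split j) => [u|v]; case: (split j') => [u'|v'] /=; rewrite ?bl2 ?br2.
  - by move/ia02 => ->.
  - by move=> E; move: (ga2 v' u); rewrite E eqxx.
  - by move=> E; move: (ga2 v u'); rewrite E eqxx.
  - by move/ig2 => ->.
have sb1 : forall x, exists j, b1 j = x.
  move=> x; case: (pickP (fun u => a1 u == x)) => [u /eqP <-|H].
    by exists (lshift _ u); rewrite bl1.
  have [v Ev] : exists v, g1 v = x by apply: gc1 => u; rewrite H.
  by exists (rshift _ v); rewrite br1.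
have sb2 : forall x, exists j, b2 j = x.
  move=> x; case: (pickP (fun u => a2 u == x)) => [u /eqP <-|H].
    by exists (lshift _ u); rewrite bl2.
  have [v Ev] : exists v, g2 v = x by apply: gc2 => u; rewrite H.
  by exists (rshift _ v); rewrite br2.
have vt : cvalid t.
  apply/validJP; split => //=.
  - move=> x; rewrite ffunE eqxx; apply/esym; have [j <-] := sb1 x; exact: codom_f.
  - by move=> x y; rewrite ffunE.
  - split; first by move=> x x' _; rewrite ffunE.
    move=> y H; exfalso; have [j E] := sb2 y; by move: H; rewrite -E codom_f.
have ex : forall y, cvalid y -> rJ1 y = rJ1 t -> rJ2 y = rJ2 t ->
    exists f, @cmor JCat k l y t f.
  move=> [m c] vc /= /ffunP E1 /ffunP E2.
  move: (vc) => /validJP [ic1 ic2 cc3 cc4 [cc5 cc6]].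
  have ca1 : forall u, (c : homJ _ _).1.1 (lshift m.1 u) = a1 u.
    by move=> u; move: (E1 u); rewrite !ffunE /= split_l.
  have ca2 : forall u, (c : homJ _ _).1.2 (lshift m.2 u) = a2 u.
    by move=> u; move: (E2 u); rewrite !ffunE /= split_l.
  have nc1 : forall v u, a1 u != (c : homJ _ _).1.1 (rshift k.1 v).
    move=> v u; rewrite -ca1; apply/eqP => /ic1 /eqP.
    by rewrite (negbTE (lshift_rshift_neq _ _)).
  have nc2 : forall v u, a2 u != (c : homJ _ _).1.2 (rshift k.2 v).
    move=> v u; rewrite -ca2; apply/eqP => /ic2 /eqP.
    by rewrite (negbTE (lshift_rshift_neq _ _)).
  have : forall v, exists w, g1 w = (c : homJ _ _).1.1 (rshift k.1 v).
    by move=> v; apply: gc1 => u; exact: nc1.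
  case/fin_all_exists => F1 FE1.
  have : forall v, exists w, g2 w = (c : homJ _ _).1.2 (rshift k.2 v).
    by move=> v; apply: gc2 => u; exact: nc2.
  case/fin_all_exists => F2 FE2.
  have gz : forall z, z \notin codom (c : homJ _ _).1.2 -> exists w, g2 w = z.
    move=> z Hz; apply: gc2 => u; apply/eqP => E; move: Hz.
    by rewrite -E -ca2 codom_f.
  pose tau : {ffun 'I_(l.1 - k.1) -> option 'I_(l.2 - k.2)} :=
    [ffun w => if (c : homJ _ _).2 (g1 w) is Some z then [pick w' | g2 w' == z] else None].
  have tauE : forall w, omap g2 (tau w) = (c : homJ _ _).2 (g1 w).
    move=> w; rewrite ffunE; case E: ((c : homJ _ _).2 (g1 w)) => [z|] //=.
    case: pickP => [w' /eqP <- // | H].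
    have [w' Ew'] := gz z (cc4 _ _ E).
    by move: (H w'); rewrite Ew' eqxx.
  pose f : homJ m (l.1 - k.1, l.2 - k.2) := ([ffun v => F1 v], [ffun v => F2 v], tau).
  exists f; split.
    apply/validJP; split => /=.
    - move=> v v'; rewrite !ffunE => /(congr1 g1); rewrite !FE1.
      by move/ic1/rshift_inj.
    - move=> v v'; rewrite !ffunE => /(congr1 g2); rewrite !FE2.
      by move/ic2/rshift_inj.
    - move=> w.
      have -> : (tau w == None) = ((c : homJ _ _).2 (g1 w) == None).
        by rewrite -tauE; case: (tau w).
      rewrite cc3; apply/codomP/codomP => [[j Ej] | [v Ev]].
        move: Ej; rewrite -(splitK j); case: (split j) => [u|v] /= Ej.
          by move: (ga1 w u); rewrite -ca1 Ej eqxx.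
        by exists v; rewrite ffunE; apply: ig1; rewrite FE1 Ej.
      by exists (rshift k.1 v); rewrite Ev ffunE FE1.
    - move=> w y Ety; apply/codomP => -[v Ev].
      have Ec : (c : homJ _ _).2 (g1 w) = Some (g2 y) by rewrite -tauE Ety.
      move: (cc4 _ _ Ec); rewrite Ev ffunE FE2 codom_f.
      by [].
    - split.
        move=> w w' Ew N.
        have N' : (c : homJ _ _).2 (g1 w) != None by rewrite -tauE; case: (tau w) N.
        have : (c : homJ _ _).2 (g1 w) = (c : homJ _ _).2 (g1 w') by rewrite -!tauE Ew.
        by move/cc5 => /(_ N') /ig1.
      move=> y Hy.
      have Hz : g2 y \notin codom (c : homJ _ _).1.2.
        apply/codomP => -[j Ej]; move: Ej; rewrite -(splitK j).
        case: (split j) => [u|v] /= Ej.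
          by move: (ga2 y u); rewrite -ca2 Ej eqxx.
        rewrite -FE2 in Ej; move/ig2: Ej => Ej; move: Hy; rewrite Ej.
        by move/codomP; apply; exists v; rewrite ffunE.
      have [x Ex] := cc6 _ Hz.
      have : ((c : homJ _ _).2 x == None) = false by rewrite Ex.
      rewrite cc3 => Hx.
      have : forall u, a1 u != x.
        by move=> u; apply/eqP => E; move: Hx; rewrite -E -ca1 codom_f.
      case/gc1 => w Ew; exists w.
      have := tauE w; rewrite Ew Ex.
      by case: (tau w) => [y'|] //= [/ig2 ->].
  apply: homJ_ext; apply/ffunP => j.
  - rewrite ffunE /=; rewrite -(splitK j); case: (split j) => [u|v] /=.
      rewrite tensI_l (_ : [ffun i => i] u = u); last by rewrite ffunE.
      by rewrite bl1 ca1.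
    rewrite tensI_r (_ : [ffun v => F1 v] v = F1 v); last by rewrite ffunE.
    by rewrite br1 FE1.
  - rewrite ffunE /=; rewrite -(splitK j); case: (split j) => [u|v] /=.
      rewrite tensI_l (_ : [ffun i => i] u = u); last by rewrite ffunE.
      by rewrite bl2 ca2.
    rewrite tensI_r (_ : [ffun v => F2 v] v = F2 v); last by rewrite ffunE.
    by rewrite br2 FE2.
  - have [j' <-] := sb1 j.
    rewrite (compJ3_at (tenshJ (idJ k) f) vt (erefl (b.1.1 j'))).
    rewrite -(splitK j'); case: (split j') => [u|w]; rewrite [unsplit _]/=.
      rewrite tenshJ3l (_ : (idJ k).2 u = None); last by rewrite ffunE.
      rewrite /= bl1 -ca1.
      by apply/esym/eqP; rewrite cc3 codom_f.
    rewrite tenshJ3r br1 -tauE.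
    by case: (tau w) => //= w'; rewrite br2.
have rt1 : forall u, rJ1 t u = a1 u by move=> u; rewrite ffunE /= bl1.
have rt2 : forall u, rJ2 t u = a2 u by move=> u; rewrite ffunE /= bl2.
exists t; split => //; split.
  apply: rst_step; split => //; split => //.
  apply: ex => //; apply/ffunP => u; by rewrite ?rt1 ?rt2 ffunE.
move=> y vy cy; have [E1 E2] := rJ_conn cy.
have [f Hf] := ex y vy E1 E2.
exists f; split => // f'; exact: cmorJ_uniq.
Qed.


Lemma key_fam N k n (s : 'S_n) (T : {ffun 'I_N -> 'I_N}) (F : 'I_n -> 'I_k -> 'I_k) :
  N = k * n ->
  (forall (i : 'I_n) (r : 'I_k) (j : 'I_N), val j = i * k + r -> val (T j) = i * k + F i r) ->
  (forall j, bpermN N k s (T j) = j) -> forall i r, s i = i /\ F i r = r.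
Proof.
move=> EN HT HB i r.
have Hj : i * k + r < N.
  rewrite EN; apply: (leq_trans (n := i.+1 * k)).
    by rewrite mulSn addnC ltn_add2r.
  by rewrite mulnC leq_mul2l ltn_ord orbT.
pose j := Ordinal Hj.
have Ev := HT i r j erefl.
have Eb := bpermN_val s (i := i) (r := F i r) EN Ev.
have := congr1 val (HB j); rewrite Eb /= => E2.
have [-> Er] := key_arith (ltn_ord r) (ltn_ord _) E2.
by split => //; apply: val_inj.
Qed.

Lemma obpowJ k n : (@obpow JCat k n).1 = k.1 * n /\ (@obpow JCat k n).2 = k.2 * n.
Proof.
elim: n => [|n [IH1 IH2]]; first by rewrite !muln0.
by rewrite /obpow /= -/(obpow _ _) IH1 IH2 !mulnS.
Qed.

Lemma tfJ1_val k n (f : 'I_n -> hom JCat k k) (i : 'I_n) (r : 'I_k.1)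
    (j : 'I_((@obpow JCat k n).1)) :
  val j = i * k.1 + r -> val ((tens_fam f : homJ _ _).1.1 j) = i * k.1 + (f i : homJ _ _).1.1 r.
Proof.
elim: n f i j => [|n IH] f i j; first by case: i.
rewrite /= ffunE.
case: (unliftP ord0 i) => [i'|] -> Ej.
  rewrite lift0 in Ej; case: splitP => [j0 /= Hj | j1 /= Hj].
    by move: (ltn_ord j0); rewrite -Hj Ej mulSn -addnA ltnNge leq_addr.
  rewrite Hj mulSn in Ej; move/eqP: Ej; rewrite -addnA eqn_add2l => /eqP Ej.
  by rewrite (IH _ _ _ Ej) /bump leq0n add1n mulSn addnA.
rewrite (_ : nat_of_ord (@ord0 n) = 0) // mul0n add0n in Ej *; case: splitP => [j0 /= Hj | j1 /= Hj].
  by congr (nat_of_ord ((f ord0).1.1 _)); apply: val_inj; rewrite /= -Hj.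
by move: (ltn_ord r); rewrite -Ej Hj ltnNge leq_addr.
Qed.

Lemma tfJ2_val k n (f : 'I_n -> hom JCat k k) (i : 'I_n) (r : 'I_k.2)
    (j : 'I_((@obpow JCat k n).2)) :
  val j = i * k.2 + r -> val ((tens_fam f : homJ _ _).1.2 j) = i * k.2 + (f i : homJ _ _).1.2 r.
Proof.
elim: n f i j => [|n IH] f i j; first by case: i.
rewrite /= ffunE.
case: (unliftP ord0 i) => [i'|] -> Ej.
  rewrite lift0 in Ej; case: splitP => [j0 /= Hj | j1 /= Hj].
    by move: (ltn_ord j0); rewrite -Hj Ej mulSn -addnA ltnNge leq_addr.
  rewrite Hj mulSn in Ej; move/eqP: Ej; rewrite -addnA eqn_add2l => /eqP Ej.
  by rewrite (IH _ _ _ Ej) /bump leq0n add1n mulSn addnA.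
rewrite (_ : nat_of_ord (@ord0 n) = 0) // mul0n add0n in Ej *; case: splitP => [j0 /= Hj | j1 /= Hj].
  by congr (nat_of_ord ((f ord0).1.2 _)); apply: val_inj; rewrite /= -Hj.
by move: (ltn_ord r); rewrite -Ej Hj ltnNge leq_addr.
Qed.

Lemma veryJ k l n (x : @cobj JCat (@obpow JCat k n) l) (s : 'S_n)
    (f : 'I_n -> hom JCat k k) :
  0 < k.1 -> cvalid x -> (forall i, valid (f i)) ->
  cconn (cact_wr x s f) x -> s = 1%g /\ (forall i, f i = idm k).
Proof.
move=> k0 vx vf /rJ_conn [E1 E2].
case: x vx E1 E2 => [m a] /= va E1 E2.
move: (va) => /validJP [ia1 ia2 _ _ _].
have [EN1 EN2] := obpowJ k n.
have H1 : forall j, bpermN (@obpow JCat k n).1 k.1 s ((tens_fam f : homJ _ _).1.1 j) = j.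
  move=> j; move/ffunP: E1 => /(_ j) E; rewrite /rJ1 !ffunE /= split_l ffunE in E.
  exact: (lshift_inj (ia1 _ _ E)).
have H2 : forall j, bpermN (@obpow JCat k n).2 k.2 s ((tens_fam f : homJ _ _).1.2 j) = j.
  move=> j; move/ffunP: E2 => /(_ j) E; rewrite /rJ2 !ffunE /= split_l ffunE in E.
  exact: (lshift_inj (ia2 _ _ E)).
have K1 := key_fam EN1 (@tfJ1_val k n f) H1.
have s1 : s = 1%g by apply/permP => i; rewrite perm1; case: (K1 i (Ordinal k0)).
split => // i.
move: (vf i) => /validJP [i1 i2 c3 _ _].
have f1 : forall r, (f i).1.1 r = r by move=> r; by case: (K1 i r).
have f2 : forall r, (f i).1.2 r = r.
  move=> r; have k2 : 0 < k.2 by apply: leq_ltn_trans (ltn_ord r).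
  have K2 := key_fam EN2 (@tfJ2_val k n f) H2.
  by case: (K2 i r).
apply: homJ_ext; apply/ffunP => r; rewrite ffunE //=.
by apply/eqP; rewrite c3; apply/codomP; exists r; rewrite f1.
Qed.


Theorem proposition5p7 (K : SMCat) (HC : (ob K -> Prop) -> Prop)
    (Aob : ob K -> Prop) (Ahom : forall k, hom K k k -> Prop) :
  (K = ICat \/ K = JCat) ->
  aut_subcat Aob Ahom -> normal_autsub Aob Ahom -> mult_autsub Aob Ahom ->
  HC Aob ->
  well_structured HC Aob Ahom /\
  ((forall k, Aob k -> 0 < deg K k) -> very_well_structured HC Aob Ahom).
Proof.
move=> HK Haut Hnorm Hmult Hhc.
have Hval : forall k g, Ahom k g -> valid g.
  by move=> k g /(proj1 (proj2 Haut)) [_ []].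
case: HK => HK; subst K.
- have ws : well_structured HC Aob Ahom.
    split; first exact: degI.
    split => //; split => //; split => //.
    split; first exact: isoI.
    split; first by move=> k l _; exact: termI.
    split => //; by move=> k l _; exact: freeI.
  split => // Hdeg; split => // k l n Ak n0 x s f vx Af C.
  exact: (veryI (Hdeg k Ak) vx C).
- have ws : well_structured HC Aob Ahom.
    split; first exact: degJ.
    split => //; split => //; split => //.
    split; first exact: isoJ.
    split; first by move=> k l _; exact: termJ.
    split => //; move=> k l _; apply: freeJ; exact: Hval.
  split => // Hdeg; split => // k l n Ak n0 x s f vx Af C.
  apply: (veryJ (Hdeg k Ak) vx _ C) => i; exact: Hval (Af i).
Qed.
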